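(* Let $m\ge 2$, let $K/F$ be a cyclic Galois field extension of degree $m$ with $\mathrm{Gal}(K/F)=\langle\sigma\rangle$, and suppose $F$ contains a primitive $m$th root of unity $\omega$. Let $d\in K\setminus F$ and suppose that the nonassociative cyclic algebra $A=(K/F,\sigma,d)$ is a division algebra. Then $A$ is a nonassociative cyclic extension of $K$ of degree $m$, and the corresponding cyclic subgroup of order $m$ of $\mathrm{Aut}_F(A)$ is generated by the automorphism $H_{\mathrm{id},\omega}$.
   Context: For a field $K$ and $\sigma\in\mathrm{Aut}(K)$, the twisted polynomial ring $K[t;\sigma]$ consists of polynomials $\sum a_it^i$ ($a_i\in K$) with termwise addition and multiplication determined by $ta=\sigma(a)t$. For $f=t^m-d\in K[t;\sigma]$, $d\in K^\times$, every $g$ can be uniquely written $g=qf+r$ with $\deg r<m$ (right division); the nonassociative cyclic algebra $(K/F,\sigma,d)$ is the $F$-vector space of polynomials of degree $<m$ with multiplication $g\circ h=$ remainder of $gh$ on right division by $f$; it is a unital (generally nonassociative) algebra over $F$ containing $K$. For $k\in K$ with $N_{K/F}(k)=1$, $H_{\mathrm{id},k}(\sum_{i=0}^{m-1}a_it^i)=a_0+\sum_{i=1}^{m-1}a_i\big(\prod_{l=0}^{i-1}\sigma^l(k)\big)t^i$. An algebra $A\ne0$ is a division algebra if left and right multiplication by every nonzero element are bijective. Definition: if $A$ is a nonassociative division algebra and $D\subseteq A$ an associative division subalgebra, $A$ is a nonassociative cyclic extension of $D$ of degree $m$ if $A$ is a free left $D$-module of rank $m$ and $\mathrm{Aut}(A)$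 has a cyclic subgroup $G$ of order $m$ such that $H|_D=\mathrm{id}_D$ for all $H\in G$. *)

(* Defs.v *)
From HB Require Import structures.
From mathcomp Require Import all_boot all_order all_algebra all_fingroup all_field.
Set Implicit Arguments. Unset Strict Implicit. Unset Printing Implicit Defensive.
Import GRing.Theory.
Local Open Scope ring_scope.

Section NonassocAlgebra.
Variables (F : fieldType) (T : zmodType) (scal : F -> T -> T)
  (mul : T -> T -> T) (one : T).

Definition is_division_algebra : Prop :=
  (exists x : T, x != 0) /\
  forall a : T, a != 0 -> bijective (mul a) /\ bijective (fun y => mul y a).

Definition is_assoc_division_subalgebra (D : T -> Prop) : Prop :=
  [/\ D 0, D one,
      (forall x y, D x -> D y -> D (x + y) /\ D (mul x y)) &
      (forall c x, D x -> D (scal c x))] /\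
  [/\ (forall x y z, D x -> D y -> D z -> mul (mul x y) z = mul x (mul y z)),
      (exists x, D x /\ x != 0) &
      (forall a, D a -> a != 0 -> exists2 b, D b & mul a b = one /\ mul b a = one)].

Definition is_free_left_module (D : T -> Prop) (m : nat) : Prop :=
  exists b : 'I_m -> T, forall x : T,
    exists! c : {ffun 'I_m -> T},
      (forall i, D (c i)) /\ x = \sum_(i < m) mul (c i) (b i).

Definition is_algebra_aut (H : T -> T) : Prop :=
  [/\ bijective H,
      (forall x y, H (x + y) = H x + H y),
      (forall c x, H (scal c x) = scal c (H x)) &
      (forall x y, H (mul x y) = mul (H x) (H y))].

Definition cyclic_gen (g : T -> T) : (T -> T) -> Prop :=
  fun H => exists k : nat, H =1 iter k g.

Definition is_cyclic_aut_subgroup (G : (T -> T) -> Prop) (m : nat) : Prop :=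
  exists g : T -> T,
    [/\ is_algebra_aut g,
        (forall H, G H <-> cyclic_gen g H),
        iter m g =1 id &
        (forall k, (0 < k < m)%N -> ~ (iter k g =1 id))].

Definition nonassoc_cyclic_ext_with (D : T -> Prop) (m : nat)
    (G : (T -> T) -> Prop) : Prop :=
  [/\ is_division_algebra,
      is_assoc_division_subalgebra D,
      is_free_left_module D m,
      is_cyclic_aut_subgroup G m &
      (forall H, G H -> forall x, D x -> H x = x)].

Definition nonassoc_cyclic_ext (D : T -> Prop) (m : nat) : Prop :=
  exists G, nonassoc_cyclic_ext_with D m G.

End NonassocAlgebra.

(* K is L (a field extension of F), an element sum_{i<m} a_i t^i is    *)
(* stored as its coefficient function a : 'I_m -> L.                   *)
Section CyclicAlgebra.
Variables (F : fieldType) (L : splittingFieldType F) (m : nat)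
  (sigma : gal_of {:L}) (d : L).

Definition cyc_alg := {ffun 'I_m -> L}.

Definition sig (i : nat) (x : L) : L := (sigma ^+ i)%g x.

(* Product g o h = remainder of g h on right division by t^m - d in
   K[t;sigma].  Using t a = sigma(a) t one gets
   (a t^i)(b t^j) = a sigma^i(b) t^(i+j), and the remainder of
   a t^(m+k) (k < m) on right division by t^m - d is a sigma^k(d) t^k,
   since t^(m+k) = t^k (t^m - d) + sigma^k(d) t^k. *)
Definition cyc_mul (x y : cyc_alg) : cyc_alg :=
  [ffun k : 'I_m => \sum_(i < m) \sum_(j < m)
      (if (i + j == k)%N then x i * sig i (y j)
       else if (i + j == k + m)%N then x i * sig i (y j) * sig k d
       else 0)].

Definition cyc_const (a : L) : cyc_alg :=
  [ffun i : 'I_m => if (val i == 0)%N then a else 0].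

Definition cyc_one : cyc_alg := cyc_const 1.

Definition cyc_scal (c : F) (x : cyc_alg) : cyc_alg :=
  [ffun i => c%:A * x i].

Definition cyc_K (x : cyc_alg) : Prop := exists a : L, x = cyc_const a.

Definition H_id (k : L) (x : cyc_alg) : cyc_alg :=
  [ffun i : 'I_m => x i * \prod_(l < val i) sig l k].

End CyclicAlgebra.

(* Main.v *)
Require Import Defs.
From HB Require Import structures.
From mathcomp Require Import all_boot all_order all_algebra all_fingroup all_field.
Import GRing.Theory.
Local Open Scope ring_scope.

Lemma gal_fixA (F : fieldType) (L : splittingFieldType F) (g : gal_of {:L}) (c : F) :
  g (c%:A) = c%:A.
Proof. by rewrite linearZ /= rmorph1. Qed.

Lemma sig_fixA (F : fieldType) (L : splittingFieldType F) (sigma : gal_of {:L}) l (c : F) :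
  sig sigma l (c%:A) = c%:A.
Proof. exact: gal_fixA. Qed.

Lemma sig0 (F : fieldType) (L : splittingFieldType F) (sigma : gal_of {:L}) (x : L) :
  sig sigma 0 x = x.
Proof. by rewrite /sig expg0 gal_id. Qed.

Lemma mul_const_l (F : fieldType) (L : splittingFieldType F) (n : nat)
   (sigma : gal_of {:L}) (d a : L) (y : cyc_alg L n.+1) :
  cyc_mul sigma d (cyc_const n.+1 a) y = [ffun k => a * y k].
Proof.
apply/ffunP => k; rewrite !ffunE big_ord_recl /=.
rewrite [X in _ + X]big1 ?addr0; last first.
  move=> i _; apply: big1 => j _; rewrite ffunE /=.
  by case: ifP => _; rewrite ?mul0r //; case: ifP => _; rewrite ?mul0r.
rewrite ffunE /= (bigD1 k) //= add0n eqxx sig0 big1 ?addr0 // => j /negbTE jk.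
rewrite add0n; move: jk; rewrite -(inj_eq val_inj) /= => -> /=.
have -> : (nat_of_ord j == k + n.+1)%N = false.
  by apply/negbTE; rewrite neq_ltn (leq_trans (ltn_ord j)) // leq_addl.
done.
Qed.

Lemma mul_const (F : fieldType) (L : splittingFieldType F) (n : nat)
   (sigma : gal_of {:L}) (d a b : L) :
  cyc_mul sigma d (cyc_const n.+1 a) (cyc_const n.+1 b) = cyc_const n.+1 (a * b).
Proof.
rewrite mul_const_l; apply/ffunP => k; rewrite !ffunE.
by case: ifP; rewrite ?mulr0.
Qed.

Lemma H_idE (F : fieldType) (L : splittingFieldType F) (n : nat)
   (sigma : gal_of {:L}) (w : F) (x : cyc_alg L n) :
  H_id sigma (w%:A) x = [ffun i => x i * (w%:A) ^+ i].
Proof.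
apply/ffunP => i; rewrite !ffunE; congr (_ * _).
rewrite (eq_bigr (fun _ => w%:A)); first by rewrite prodr_const card_ord.
move=> l _.
exact: sig_fixA.
Qed.
From mathcomp Require Import ring.

Lemma sig_fixAX (F : fieldType) (L : splittingFieldType F) (sigma : gal_of {:L}) l (c : F) j :
  sig sigma l (c%:A ^+ j) = c%:A ^+ j.
Proof. by rewrite /sig rmorphXn /= gal_fixA. Qed.

Lemma sigM (F : fieldType) (L : splittingFieldType F) (sigma : gal_of {:L}) l (a b : L) :
  sig sigma l (a * b) = sig sigma l a * sig sigma l b.
Proof. by rewrite /sig rmorphM. Qed.

Lemma H_mul (F : fieldType) (L : splittingFieldType F) (m : nat)
   (sigma : gal_of {:L}) (d : L) (w : F) (x y : cyc_alg L m) :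
  (w%:A : L) ^+ m = 1 ->
  H_id sigma (w%:A) (cyc_mul sigma d x y) =
  cyc_mul sigma d (H_id sigma (w%:A) x) (H_id sigma (w%:A) y).
Proof.
move=> hm; rewrite !H_idE; apply/ffunP => k; rewrite !ffunE mulr_suml.
apply: eq_bigr => i _; rewrite mulr_suml; apply: eq_bigr => j _.
rewrite !ffunE sigM sig_fixAX.
case: ifP => [/eqP h | _]; first by rewrite -h exprD; ring.
case: ifP => [/eqP h | _]; last by rewrite mul0r.
have e : (w%:A:L) ^+ i * w%:A ^+ j = w%:A ^+ k by rewrite -exprD h exprD hm mulr1.
by rewrite -e; ring.
Qed.

Lemma iter_H (F : fieldType) (L : splittingFieldType F) (m : nat)
   (sigma : gal_of {:L}) (w : F) k (x : cyc_alg L m) :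
  iter k (H_id sigma (w%:A)) x = [ffun i => x i * ((w%:A) ^+ i) ^+ k].
Proof.
elim: k => [|k IH]; first by apply/ffunP => i; rewrite ffunE expr0 mulr1.
rewrite iterS IH H_idE; apply/ffunP => i; rewrite !ffunE exprS; ring.
Qed.

Definition ee (F : fieldType) (L : splittingFieldType F) n (j : 'I_n) : cyc_alg L n :=
  [ffun k : 'I_n => if k == j then 1 else 0].
Arguments ee {F L n} j.

Lemma mul_const_e (F : fieldType) (L : splittingFieldType F) (n : nat)
   (sigma : gal_of {:L}) (d a : L) j k :
  cyc_mul sigma d (cyc_const n.+1 a) (ee j) k = if k == j then a else 0.
Proof. by rewrite mul_const_l !ffunE; case: ifP; rewrite ?mulr1 ?mulr0. Qed.

Theorem theorem2p3 (F : fieldType) (L : splittingFieldType F) (m : nat)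
    (sigma : gal_of {:L}) (omega : F) (d : L) :
  (2 <= m)%N ->
  galois 1%VS {:L} ->
  \dim {:L} = m ->
  ('Gal({:L} / 1%VS))%g = <[sigma]>%g ->
  m.-primitive_root omega ->
  d \notin 1%VS ->
  is_division_algebra (@cyc_mul F L m sigma d) ->
  nonassoc_cyclic_ext (@cyc_scal F L m) (@cyc_mul F L m sigma d)
    (@cyc_one F L m) (@cyc_K F L m) m /\
  nonassoc_cyclic_ext_with (@cyc_scal F L m) (@cyc_mul F L m sigma d)
    (@cyc_one F L m) (@cyc_K F L m) m
    (cyclic_gen (@H_id F L m sigma (omega%:A))).
Proof.
move=> hm _ _ _ prim _ hdiv.
case: m hm prim hdiv => [|[|n]] // _ prim hdiv.
set g := H_id sigma (omega%:A).
have hW : (omega%:A : L) ^+ n.+2 = 1.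
  by rewrite -in_algE -rmorphXn prim_expr_order // rmorph1.
have hid : iter n.+2 g =1 id.
  move=> x; rewrite iter_H; apply/ffunP => i; rewrite ffunE.
  by rewrite exprAC hW expr1n mulr1.
suff H : nonassoc_cyclic_ext_with (@cyc_scal F L n.+2) (@cyc_mul F L n.+2 sigma d)
    (@cyc_one F L n.+2) (@cyc_K F L n.+2) n.+2 (cyclic_gen g).
  by split => //; exists (cyclic_gen g).
split.
- exact: hdiv.
- split; split.
  + exists 0; apply/ffunP => i; rewrite !ffunE; by case: ifP.
  + by exists 1.
  + move=> x y [a ->] [b ->]; split; last by exists (a * b); exact: mul_const.
    exists (a + b); apply/ffunP => i; rewrite !ffunE; by case: ifP; rewrite ?addr0.
  + move=> c x [a ->]; exists (c%:A * a); apply/ffunP => i; rewrite !ffunE.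
    by case: ifP; rewrite ?mulr0.
  + by move=> x y z [a ->] [b ->] [c ->]; rewrite !mul_const mulrA.
  + exists (cyc_one L n.+2); split; first by exists 1.
    apply/eqP => /ffunP /(_ ord0); rewrite !ffunE /=.
    by move/eqP; rewrite oner_eq0.
  + move=> x [a ->] nz.
    have a0 : a != 0.
      apply: contraNneq nz => ->; apply/eqP/ffunP => i; rewrite !ffunE.
      by case: ifP.
    exists (cyc_const n.+2 a^-1); first by exists a^-1.
    by rewrite /cyc_one !mul_const mulfV // mulVf.
- exists (fun i => ee i) => x.
  exists [ffun i => cyc_const n.+2 (x i)]; split.
    split; first by move=> i; exists (x i); rewrite ffunE.
    apply/ffunP => k; rewrite sum_ffunE.
    under eq_bigr => j _ do rewrite [[ffun i => _] j]ffunE mul_const_e.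
    rewrite (bigD1 k) //= eqxx big1 ?addr0 //.
    by move=> j /negbTE jk; rewrite eq_sym jk.
  move=> c [hc hx]; apply/ffunP => i; rewrite ffunE.
  case: (hc i) => a ha; rewrite ha; congr cyc_const.
  move/ffunP: hx => /(_ i); rewrite sum_ffunE (bigD1 i) //= big1 ?addr0.
    by rewrite ha mul_const_e eqxx.
  move=> j /negbTE ij; case: (hc j) => b ->.
  by rewrite mul_const_e eq_sym ij.
- exists g; split.
  + split.
    * exists (iter n.+1 g) => x; first by rewrite -iterSr hid.
      by rewrite -iterS hid.
    * move=> x y; rewrite /g !H_idE; apply/ffunP => i; rewrite !ffunE; exact: mulrDl.
    * move=> c x; rewrite /g !H_idE; apply/ffunP => i; rewrite !ffunE; by rewrite mulrA.
    * move=> x y; exact: H_mul hW.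
  + by [].
  + exact: hid.
  + move=> k /andP [k0 km] /(_ (ee (Ordinal (isT : (1 < n.+2)%N)))).
    rewrite iter_H => /ffunP /(_ (Ordinal (isT : (1 < n.+2)%N))).
    rewrite !ffunE eqxx mul1r expr1 -in_algE -rmorphXn => /eqP.
    rewrite fmorph_eq1 -(prim_order_dvd prim) => /dvdn_leq.
    by move=> /(_ k0); rewrite leqNgt km.
- move=> H [k hk] x [a ->]; rewrite hk iter_H; apply/ffunP => i; rewrite !ffunE.
  by case: ifP => [/eqP -> | _]; rewrite ?expr0 ?expr1n ?mulr1 ?mul0r.
Qed.
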